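(* Let $A=(a_{nk})$ be an infinite complex matrix such that $l_A$ contains $\phi$ and $e$. If $l_A$ is deferred Ces\`{a}ro conull, then $A$ is not $l$-replaceable.
   Context: Fix sequences $p=(p(n))$, $q=(q(n))$ of nonnegative integers with $p(n)<q(n)$ for all $n$ and $q(n)\to\infty$. $\delta^j$ denotes the sequence with $1$ in position $j$ and $0$ elsewhere, $\phi$ the linear span of all $\delta^j$, $e=(1,1,1,\dots)$, and $\phi_1$ the span of $\phi$ and $e$. For a matrix $A$, $l_A=\{x : \sum_k a_{nk}x_k \text{ converges for each } n \text{ and } \sum_n|\sum_k a_{nk}x_k|<\infty\}$, an FK-space (complete metrizable locally convex sequence space with continuous coordinates) with its usual topology given by the seminorms $|x_n|$, $\sum_n|\sum_k a_{nk}x_k|$, and $\sup_m|\sum_{k=1}^m a_{nk}x_k|$; $l_A'$ is its continuous dual. $A$ (with $l_A\supseteq\phi$) is called $l$-replaceable if there is a matrix $D=(d_{nk})$ with $l_D=l_A$ and $\sum_n d_{nk}=1$ for every $k$. An FK-space $X\supseteq\phi_1$ is called deferred Ces\`{a}ro conull if for every $f\in X'$, $f(e)=\lim_{n\to\infty}\frac{1}{q(n)-p(n)}\sum_{k=p(n)+1}^{q(n)}\sum_{j=1}^{k}f(\delta^j)$. *)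

(* Defs.v *)
From Stdlib Require Import Reals.
From Coquelicot Require Import Coquelicot.
Open Scope R_scope.

(* Sequences are indexed by nat; paper index k >= 1 corresponds to nat index k-1. *)
Definition cseq := nat -> C.
Definition cmatrix := nat -> nat -> C.

Fixpoint psum (a : cseq) (m : nat) : C :=
  match m with O => RtoC 0 | S m' => Cplus (psum a m') (a m') end.

Definition has_csum (a : cseq) (l : C) : Prop :=
  filterlim (psum a) eventually (locally l).
Definition cconv (a : cseq) : Prop := exists l, has_csum a l.
(* the sum of a series (meaningful when it converges) *)
Definition csum (a : cseq) : C :=
  (Series (fun k => Re (a k)), Series (fun k => Im (a k))).

Definition delta (j : nat) : cseq := fun k => if Nat.eqb k j then RtoC 1 else RtoC 0.
Definition e_seq : cseq := fun _ => RtoC 1.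

Definition Arow (A : cmatrix) (x : cseq) (n : nat) : C := csum (fun k => Cmult (A n k) (x k)).

Definition lA (A : cmatrix) (x : cseq) : Prop :=
  (forall n, cconv (fun k => Cmult (A n k) (x k))) /\
  ex_series (fun n => Cmod (Arow A x n)).

(* seminorms of the FK topology of l_A *)
Definition sem_coord (x : cseq) (n : nat) : R := Cmod (x n).
Definition sem_sum (A : cmatrix) (x : cseq) : R := Series (fun n => Cmod (Arow A x n)).
Definition sem_sup (A : cmatrix) (x : cseq) (n : nat) : R :=
  real (Lub_Rbar (fun t => exists m, t = Cmod (psum (fun k => Cmult (A n k) (x k)) m))).

Fixpoint rsum (g : nat -> R) (N : nat) : R :=
  match N with O => 0 | S N' => rsum g N' + g N' end.

(* f is a continuous linear functional on l_A (f in l_A'): linear on l_A and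
   bounded by finitely many of the defining seminorms of the locally convex
   topology. *)
Definition lA_dual (A : cmatrix) (f : cseq -> C) : Prop :=
  (forall x y, lA A x -> lA A y -> f (fun k => Cplus (x k) (y k)) = Cplus (f x) (f y)) /\
  (forall (c : C) x, lA A x -> f (fun k => Cmult c (x k)) = Cmult c (f x)) /\
  (exists (M : R) (N : nat), forall x, lA A x ->
     Cmod (f x) <= M * (rsum (sem_coord x) N + sem_sum A x + rsum (sem_sup A x) N)).

(* deferred Cesaro averages: 1/(q n - p n) * sum_{k=p n+1}^{q n} sum_{j=1}^k f(delta^j) *)
Definition dc_mean (p q : nat -> nat) (f : cseq -> C) (n : nat) : C :=
  Cmult (RtoC (/ INR (q n - p n)))
    (psum (fun t => psum (fun i => f (delta i)) (S (p n) + t)) (q n - p n)).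

Definition dc_conull (p q : nat -> nat) (A : cmatrix) : Prop :=
  forall f, lA_dual A f -> filterlim (dc_mean p q f) eventually (locally (f e_seq)).

Definition l_replaceable (A : cmatrix) : Prop :=
  exists D : cmatrix, (forall x, lA D x <-> lA A x) /\
    (forall k, has_csum (fun n => D n k) (RtoC 1)).

(* Main.v *)
Require Import Defs.
From Stdlib Require Import Reals.
From Stdlib Require Import Lra Lia Arith FunctionalExtensionality Classical IndefiniteDescription.
From Coquelicot Require Import Coquelicot.
Open Scope R_scope.

Definition climit (u : nat -> C) (l : C) : Prop :=
  forall eps, 0 < eps -> exists N, forall m, (N <= m)%nat -> Cmod (Cminus (u m) l) < eps.
Definition rlimit (u : nat -> R) (l : R) : Prop :=
  forall eps, 0 < eps -> exists N, forall m, (N <= m)%nat -> Rabs (u m - l) < eps.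

Lemma climit_filterlim u l : climit u l -> filterlim u eventually (locally l).
Proof.
  intros H. apply filterlim_locally. intros eps.
  destruct (H eps (cond_pos eps)) as [N HN]. exists N. intros n Hn.
  apply C_NormedModule_mixin_compat1. apply HN; auto.
Qed.

Lemma filterlim_climit u l : filterlim u eventually (locally l) -> climit u l.
Proof.
  intros H eps Heps.
  assert (H2 : 0 < sqrt 2) by (apply sqrt_lt_R0; lra).
  assert (Hp : 0 < eps / sqrt 2) by (apply Rdiv_lt_0_compat; lra).
  destruct (proj1 (filterlim_locally u l) H (mkposreal _ Hp)) as [N HN].
  exists N. intros m Hm. specialize (HN m Hm).
  apply C_NormedModule_mixin_compat2 in HN. simpl in HN.
  replace eps with (sqrt 2 * (eps / sqrt 2)) by (field; lra). exact HN.
Qed.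

Lemma has_csum_climit a l : has_csum a l <-> climit (psum a) l.
Proof. split; [apply filterlim_climit | apply climit_filterlim]. Qed.

Lemma rsum_sumf b n : rsum b (S n) = sum_f_R0 b n.
Proof. induction n as [|n IHn]; [simpl; ring|]. change (rsum b (S n) + b (S n) = sum_f_R0 b (S n)). rewrite IHn. reflexivity. Qed.

Lemma rlimit_is_series b L : rlimit (rsum b) L -> is_series b L.
Proof.
  intros H. apply is_series_Reals. intros eps Heps. destruct (H eps Heps) as [N HN].
  exists N. intros n Hn. unfold R_dist. rewrite <- rsum_sumf. apply HN. lia.
Qed.

Lemma rlimit_Series b L : rlimit (rsum b) L -> Series b = L.
Proof. intros; apply is_series_unique, rlimit_is_series; auto. Qed.

Lemma rlimit_ex_series b L : rlimit (rsum b) L -> ex_series b.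
Proof. intros H. exists L. apply rlimit_is_series; auto. Qed.

Lemma Series_rlimit b : ex_series b -> rlimit (rsum b) (Series b).
Proof.
  intros H. apply Series_correct in H. apply is_series_Reals in H.
  intros eps Heps. destruct (H eps Heps) as [N HN]. exists (S N).
  intros m Hm. destruct m as [|m]. lia. rewrite rsum_sumf. apply HN. lia.
Qed.

Lemma climit_le u l c B N : climit u l -> (forall m, (N <= m)%nat -> Cmod (Cminus (u m) c) <= B) ->
  Cmod (Cminus l c) <= B.
Proof.
  intros H HB. destruct (Rle_dec (Cmod (Cminus l c)) B) as [h|h]; auto. exfalso.
  destruct (H (Cmod (Cminus l c) - B)) as [N' HN']; [lra|].
  specialize (HN' (max N N') ltac:(lia)). specialize (HB (max N N') ltac:(lia)).
  assert (Cminus l c = Cplus (Cminus l (u (max N N'))) (Cminus (u (max N N')) c)) as E by ring.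
  pose proof (Cmod_triangle (Cminus l (u (max N N'))) (Cminus (u (max N N')) c)) as H0.
  rewrite <- E in H0.
  replace (Cminus l (u (max N N'))) with (Copp (Cminus (u (max N N')) l)) in H0 by ring.
  rewrite Cmod_opp in H0. lra.
Qed.

Lemma rlimit_le u l N B : rlimit u l -> (forall m, (N <= m)%nat -> u m <= B) -> l <= B.
Proof.
  intros H HB. destruct (Rle_dec l B) as [h|h]; auto. exfalso.
  destruct (H (l - B)) as [N' HN']; [lra|].
  specialize (HN' (max N N') ltac:(lia)). specialize (HB (max N N') ltac:(lia)).
  apply Rabs_def2 in HN'. lra.
Qed.

Lemma rlimit_ge u l N B : rlimit u l -> (forall m, (N <= m)%nat -> B <= u m) -> B <= l.
Proof.
  intros H HB. destruct (Rle_dec B l) as [h|h]; auto. exfalso.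
  destruct (H (B - l)) as [N' HN']; [lra|].
  specialize (HN' (max N N') ltac:(lia)). specialize (HB (max N N') ltac:(lia)).
  apply Rabs_def2 in HN'. lra.
Qed.

Lemma rsum_nonneg g m : (forall k, 0 <= g k) -> 0 <= rsum g m.
Proof. intros H; induction m; simpl; [lra| specialize (H m); lra]. Qed.

Lemma rsum_mono g m m' : (forall k, 0 <= g k) -> (m <= m')%nat -> rsum g m <= rsum g m'.
Proof.
  intros H Hm. induction Hm; [lra|]. simpl. specialize (H m0). lra.
Qed.

Lemma rsum_le_Series g m : (forall k, 0 <= g k) -> ex_series g -> rsum g m <= Series g.
Proof.
  intros Hg He. apply (rlimit_ge (rsum g) _ m); [apply Series_rlimit; auto|].
  intros; apply rsum_mono; auto.
Qed.

Lemma Series_nonneg g : (forall k, 0 <= g k) -> ex_series g -> 0 <= Series g.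
Proof. intros. pose proof (rsum_le_Series g 0 H H0). simpl in H1. lra. Qed.

Lemma bounded_ex_series g B : (forall k, 0 <= g k) -> (forall m, rsum g m <= B) ->
  ex_series g /\ Series g <= B.
Proof.
  intros Hg HB.
  destruct (growing_cv (rsum g)) as [l Hl].
  - intros n; simpl; specialize (Hg n); lra.
  - exists B. intros x [i ->]. apply HB.
  - assert (rlimit (rsum g) l).
    { intros eps Heps. destruct (Hl eps Heps) as [N HN]. exists N. intros m Hm. apply HN. lia. }
    split. eapply rlimit_ex_series; eauto.
    rewrite (rlimit_Series _ _ H). apply (rlimit_le _ _ 0 B H). intros; auto.
Qed.

Lemma psum_ext a b m : (forall k, (k < m)%nat -> a k = b k) -> psum a m = psum b m.
Proof. induction m; intros H; simpl; auto. rewrite IHm by (intros; apply H; lia). rewrite H by lia. auto. Qed.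

Lemma psum_plus a b m : psum (fun k => Cplus (a k) (b k)) m = Cplus (psum a m) (psum b m).
Proof. induction m; simpl. ring. rewrite IHm. ring. Qed.

Lemma psum_scal c a m : psum (fun k => Cmult c (a k)) m = Cmult c (psum a m).
Proof. induction m; simpl. ring. rewrite IHm. ring. Qed.

Lemma psum_opp a m : psum (fun k => Copp (a k)) m = Copp (psum a m).
Proof. induction m; simpl. ring. rewrite IHm. ring. Qed.

Lemma psum_add a m j : psum a (m + j) = Cplus (psum a m) (psum (fun k => a (m + k)%nat) j).
Proof. induction j; simpl. rewrite Nat.add_0_r. ring. rewrite Nat.add_succ_r. simpl. rewrite IHj. ring. Qed.

Lemma rsum_add a m j : rsum a (m + j) = rsum a m + rsum (fun k => a (m + k)%nat) j.
Proof. induction j; simpl. rewrite Nat.add_0_r. ring. rewrite Nat.add_succ_r. simpl. rewrite IHj. ring. Qed.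

Lemma psum_RtoC b m : psum (fun k => RtoC (b k)) m = RtoC (rsum b m).
Proof. induction m; simpl; auto. rewrite IHm. unfold RtoC, Cplus. simpl. f_equal; ring. Qed.

Lemma psum_Re a m : Re (psum a m) = rsum (fun k => Re (a k)) m.
Proof. induction m; simpl; auto. rewrite <- IHm. reflexivity. Qed.
Lemma psum_Im a m : Im (psum a m) = rsum (fun k => Im (a k)) m.
Proof. induction m; simpl; auto. rewrite <- IHm. reflexivity. Qed.

Lemma Cmod_psum_le a g m : (forall k, Cmod (a k) <= g k) -> Cmod (psum a m) <= rsum g m.
Proof.
  intros H. induction m; simpl. rewrite Cmod_0. lra.
  eapply Rle_trans. apply Cmod_triangle. specialize (H m). lra.
Qed.

Lemma rsum_plus a b m : rsum (fun k => a k + b k) m = rsum a m + rsum b m.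
Proof. induction m; simpl. ring. rewrite IHm. ring. Qed.
Lemma rsum_scal c a m : rsum (fun k => c * a k) m = c * rsum a m.
Proof. induction m; simpl. ring. rewrite IHm. ring. Qed.
Lemma rsum_ext a b m : (forall k, (k < m)%nat -> a k = b k) -> rsum a m = rsum b m.
Proof. induction m; intros H; simpl; auto. rewrite IHm by (intros; apply H; lia). rewrite H by lia. auto. Qed.
Lemma rsum_le a b m : (forall k, (k < m)%nat -> a k <= b k) -> rsum a m <= rsum b m.
Proof. induction m; intros H; simpl. lra. pose proof (H m ltac:(lia)). pose proof (IHm ltac:(intros; apply H; lia)). lra. Qed.

Lemma Cmod_le_parts z : Cmod z <= Rabs (Re z) + Rabs (Im z).
Proof.
  destruct z as [x y]. unfold Cmod; simpl.
  rewrite <- (sqrt_Rsqr (Rabs x + Rabs y)) by (pose proof (Rabs_pos x); pose proof (Rabs_pos y); lra).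
  apply sqrt_le_1_alt. unfold Rsqr. 
  pose proof (Rabs_pos x); pose proof (Rabs_pos y).
  assert (Rabs x * Rabs x = x * x) as E1 by (rewrite <- Rabs_mult; apply Rabs_pos_eq; nra).
  assert (Rabs y * Rabs y = y * y) as E2 by (rewrite <- Rabs_mult; apply Rabs_pos_eq; nra).
  nra.
Qed.

Lemma Re_le_Cmod z : Rabs (Re z) <= Cmod z.
Proof. apply re_le_Cmod. Qed.
Lemma Im_le_Cmod z : Rabs (Im z) <= Cmod z.
Proof.
  destruct z as [x y]. unfold Cmod; simpl. rewrite <- sqrt_Rsqr_abs. apply sqrt_le_1_alt.
  unfold Rsqr. nra.
Qed.


Lemma Cmod_sym x y : Cmod (Cminus x y) = Cmod (Cminus y x).
Proof. replace (Cminus x y) with (Copp (Cminus y x)) by ring. apply Cmod_opp. Qed.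

Lemma Cmod_tri3 x y z : Cmod (Cminus x z) <= Cmod (Cminus x y) + Cmod (Cminus y z).
Proof. replace (Cminus x z) with (Cplus (Cminus x y) (Cminus y z)) by ring. apply Cmod_triangle. Qed.

Lemma csum_eq a l : has_csum a l -> csum a = l.
Proof.
  intros H. apply has_csum_climit in H. unfold csum. destruct l as [lr li].
  f_equal; apply rlimit_Series; intros eps Heps; destruct (H eps Heps) as [N HN]; exists N;
    intros m Hm; specialize (HN m Hm).
  - rewrite <- psum_Re. eapply Rle_lt_trans; [|exact HN].
    replace (Re (psum a m) - lr) with (Re (Cminus (psum a m) (lr,li))) by (unfold Cminus, Cplus, Copp, Re, Im; simpl; ring). apply Re_le_Cmod.
  - rewrite <- psum_Im. eapply Rle_lt_trans; [|exact HN].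
    replace (Im (psum a m) - li) with (Im (Cminus (psum a m) (lr,li))) by (unfold Cminus, Cplus, Copp, Re, Im; simpl; ring). apply Im_le_Cmod.
Qed.

Lemma cconv_csum a : cconv a -> has_csum a (csum a).
Proof. intros [l H]. rewrite (csum_eq a l H). auto. Qed.

Definition ccauchy (u : nat -> C) := forall eps, 0 < eps -> exists N, forall m m',
  (N<=m)%nat -> (N<=m')%nat -> Cmod (Cminus (u m) (u m')) < eps.

Lemma ccauchy_climit u : ccauchy u -> exists l, climit u l.
Proof.
  intros H.
  destruct (Rcomplete.R_complete (fun m => Re (u m))) as [lr Hr].
  { intros eps Heps. destruct (H eps Heps) as [N HN]. exists N. intros n m Hn Hm. unfold Rdist.
    eapply Rle_lt_trans; [|apply (HN n m); lia].
    replace (Re (u n) - Re (u m)) with (Re (Cminus (u n) (u m))) by (unfold Cminus, Cplus, Copp, Re, Im; simpl; ring). apply Re_le_Cmod. }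
  destruct (Rcomplete.R_complete (fun m => Im (u m))) as [li Hi].
  { intros eps Heps. destruct (H eps Heps) as [N HN]. exists N. intros n m Hn Hm. unfold Rdist.
    eapply Rle_lt_trans; [|apply (HN n m); lia].
    replace (Im (u n) - Im (u m)) with (Im (Cminus (u n) (u m))) by (unfold Cminus, Cplus, Copp, Re, Im; simpl; ring). apply Im_le_Cmod. }
  exists (lr, li). intros eps Heps.
  destruct (Hr (eps/2)) as [N1 H1]; [lra|]. destruct (Hi (eps/2)) as [N2 H2]; [lra|].
  exists (max N1 N2). intros m Hm. eapply Rle_lt_trans. apply Cmod_le_parts.
  specialize (H1 m ltac:(lia)). specialize (H2 m ltac:(lia)). unfold Rdist in *.
  assert (E1 : Re (Cminus (u m) (lr,li)) = Re (u m) - lr) by (unfold Cminus, Cplus, Copp, Re, Im; simpl; ring).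
  assert (E2 : Im (Cminus (u m) (lr,li)) = Im (u m) - li) by (unfold Cminus, Cplus, Copp, Re, Im; simpl; ring).
  rewrite E1, E2. lra.
Qed.

Lemma ccauchy_cconv a : ccauchy (psum a) -> cconv a.
Proof. intros H. destruct (ccauchy_climit _ H) as [l Hl]. exists l. apply has_csum_climit; auto. Qed.

Lemma psum_diff_le a g m j : (forall k, Cmod (a k) <= g k) ->
  Cmod (Cminus (psum a (m + j)) (psum a m)) <= rsum g (m + j) - rsum g m.
Proof.
  intros H. rewrite psum_add, rsum_add.
  replace (Cminus (Cplus (psum a m) (psum (fun k => a (m + k)%nat) j)) (psum a m))
    with (psum (fun k => a (m + k)%nat) j) by ring.
  replace (rsum g m + rsum (fun k => g (m + k)%nat) j - rsum g m) with (rsum (fun k => g (m + k)%nat) j) by ring.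
  apply Cmod_psum_le. intros; apply H.
Qed.

Lemma abs_conv a g : (forall k, Cmod (a k) <= g k) -> ex_series g ->
  has_csum a (csum a) /\ Cmod (csum a) <= Series g.
Proof.
  intros H He.
  assert (Hg : forall k, 0 <= g k) by (intros k; pose proof (Cmod_ge_0 (a k)); specialize (H k); lra).
  assert (Hc : cconv a).
  { apply ccauchy_cconv. intros eps Heps. destruct (Series_rlimit g He (eps/2)) as [N HN]; [lra|].
    exists N. intros m m' Hm Hm'.
    assert (forall m m', (N <= m)%nat -> (m <= m')%nat -> Cmod (Cminus (psum a m') (psum a m)) < eps).
    { intros m1 m2 H1 H2. replace m2 with (m1 + (m2 - m1))%nat by lia.
      eapply Rle_lt_trans. apply psum_diff_le; auto.
      pose proof (HN m1 H1). pose proof (HN (m1 + (m2 - m1))%nat ltac:(lia)).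
      apply Rabs_def2 in H0. apply Rabs_def2 in H3. lra. }
    destruct (le_lt_dec m m') as [h|h].
    - rewrite Cmod_sym. apply H0; auto.
    - apply H0; auto; lia. }
  pose proof (cconv_csum a Hc). split; auto.
  apply has_csum_climit in H0.
  replace (csum a) with (Cminus (csum a) 0) by ring.
  apply (climit_le _ _ _ _ 0 H0). intros m _. replace (Cminus (psum a m) 0) with (psum a m) by ring.
  eapply Rle_trans. apply Cmod_psum_le; eauto. apply rsum_le_Series; auto.
Qed.

Lemma cconv_bounded a : cconv a -> exists H, forall j, Cmod (psum a j) <= H.
Proof.
  intros [l Hl]. apply has_csum_climit in Hl. destruct (Hl 1) as [N HN]; [lra|].
  exists (rsum (fun k => Cmod (a k)) N + Cmod l + 1). intros j.
  destruct (le_lt_dec N j) as [h|h].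
  - specialize (HN j h). pose proof (Cmod_tri3 (psum a j) l 0).
    replace (Cminus (psum a j) 0) with (psum a j) in H by ring.
    replace (Cminus l 0) with l in H by ring.
    pose proof (rsum_nonneg (fun k => Cmod (a k)) N (fun k => Cmod_ge_0 _)). lra.
  - pose proof (Cmod_psum_le a (fun k => Cmod (a k)) j (fun k => Rle_refl _)).
    pose proof (rsum_mono (fun k => Cmod (a k)) j N (fun k => Cmod_ge_0 _) ltac:(lia)).
    pose proof (Cmod_ge_0 l). lra.
Qed.

Lemma cconv_tail a : cconv a -> forall d, 0 < d -> exists K, forall m j, (K <= m)%nat ->
  Cmod (Cminus (psum a (m + j)) (psum a m)) <= d.
Proof.
  intros [l Hl] d Hd. apply has_csum_climit in Hl. destruct (Hl (d/2)) as [N HN]; [lra|].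
  exists N. intros m j Hm. eapply Rle_trans. apply (Cmod_tri3 _ l).
  pose proof (HN (m+j)%nat ltac:(lia)). pose proof (HN m Hm). rewrite (Cmod_sym l). lra.
Qed.

Lemma noninc_le (w : nat -> R) k m : (forall k, w (S k) <= w k) -> (k <= m)%nat -> w m <= w k.
Proof. intros H Hk. induction Hk; [lra|]. specialize (H m). lra. Qed.

Lemma abel_noninc a (w : nat -> R) H m :
  (forall j, (j <= m)%nat -> Cmod (psum a j) <= H) ->
  (forall k, (k <= m)%nat -> 0 <= w k) ->
  (forall k, w (S k) <= w k) ->
  Cmod (psum (fun k => Cmult (a k) (RtoC (w k))) m) <= H * w O.
Proof.
  revert w. induction m as [|m IH]; intros w Hb Hn Hm.
  - simpl. rewrite Cmod_0. specialize (Hb 0%nat (le_n _)). simpl in Hb. rewrite Cmod_0 in Hb.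
    specialize (Hn 0%nat (le_n _)). nra.
  - assert (E : psum (fun k => Cmult (a k) (RtoC (w k))) (S m) =
      Cplus (psum (fun k => Cmult (a k) (RtoC (w k - w m))) m) (Cmult (psum a (S m)) (RtoC (w m)))).
    { simpl. rewrite (psum_ext (fun k => Cmult (a k) (RtoC (w k - w m)))
          (fun k => Cplus (Cmult (a k) (RtoC (w k))) (Cmult (Copp (RtoC (w m))) (a k)))).
      rewrite psum_plus, psum_scal. ring. intros k _. rewrite RtoC_minus. ring. }
    rewrite E. eapply Rle_trans. apply Cmod_triangle.
    pose proof (IH (fun k => w k - w m) ltac:(intros; apply Hb; lia)
      ltac:(intros k Hk; pose proof (noninc_le w k m Hm Hk); lra)
      ltac:(intros k; specialize (Hm k); lra)) as I1. simpl in I1.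
    rewrite Cmod_mult, Cmod_R, Rabs_pos_eq by (apply Hn; lia).
    pose proof (Hb (S m) (le_n _)). pose proof (Hn m ltac:(lia)).
    pose proof (noninc_le w 0 m Hm ltac:(lia)). nra.
Qed.

Lemma abel_nondec a (z : nat -> R) H eps m :
  (forall j, (j <= m)%nat -> Cmod (psum a j) <= H) ->
  (forall k, 0 <= z k <= eps) -> (forall k, z k <= z (S k)) ->
  Cmod (psum (fun k => Cmult (a k) (RtoC (z k))) m) <= 2 * H * eps.
Proof.
  intros Hb Hz Hm.
  assert (E : psum (fun k => Cmult (a k) (RtoC (z k))) m =
     Cminus (Cmult (RtoC eps) (psum a m)) (psum (fun k => Cmult (a k) (RtoC (eps - z k))) m)).
  { rewrite <- psum_scal. unfold Cminus. rewrite <- psum_opp, <- psum_plus. apply psum_ext.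
    intros k _. rewrite RtoC_minus. ring. }
  rewrite E. unfold Cminus. eapply Rle_trans. apply Cmod_triangle. rewrite Cmod_opp.
  pose proof (abel_noninc a (fun k => eps - z k) H m Hb ltac:(intros k _; specialize (Hz k); lra)
     ltac:(intros k; specialize (Hm k); lra)) as I1. simpl in I1.
  rewrite Cmod_mult, Cmod_R.
  pose proof (Hz 0%nat). assert (0 <= eps) by (specialize (Hz 0%nat); lra).
  rewrite Rabs_pos_eq by lra. pose proof (Hb m (le_n _)).
  assert (0 <= H). { specialize (Hb 0%nat ltac:(lia)). simpl in Hb. rewrite Cmod_0 in Hb. lra. }
  nra.
Qed.

Lemma abel_tail a z H eps K :
  (forall j, Cmod (Cminus (psum a (K + j)) (psum a K)) <= H) ->
  (forall k, 0 <= z k <= eps) -> (forall k, z k <= z (S k)) ->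
  forall j, Cmod (Cminus (psum (fun k => Cmult (a k) (RtoC (z k))) (K + j))
                         (psum (fun k => Cmult (a k) (RtoC (z k))) K)) <= 2 * H * eps.
Proof.
  intros Hb Hz Hm j. rewrite psum_add.
  replace (Cminus (Cplus (psum (fun k => Cmult (a k) (RtoC (z k))) K) (psum (fun k => Cmult (a (K + k)%nat) (RtoC (z (K + k)%nat))) j))
     (psum (fun k => Cmult (a k) (RtoC (z k))) K))
    with (psum (fun k => Cmult (a (K + k)%nat) (RtoC (z (K + k)%nat))) j) by ring.
  apply (abel_nondec (fun k => a (K + k)%nat) (fun k => z (K + k)%nat)).
  - intros i _. specialize (Hb i). rewrite psum_add in Hb.
    replace (Cminus (Cplus (psum a K) (psum (fun k => a (K + k)%nat) i)) (psum a K)) with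
      (psum (fun k => a (K + k)%nat) i) in Hb by ring. auto.
  - intros; apply Hz.
  - intros k. rewrite Nat.add_succ_r. apply Hm.
Qed.

Lemma abel_conv a z eps : cconv a -> (forall k, 0 <= z k <= eps) -> (forall k, z k <= z (S k)) ->
  cconv (fun k => Cmult (a k) (RtoC (z k))).
Proof.
  intros Ha Hz Hm. apply ccauchy_cconv. intros e He.
  assert (0 <= eps) by (specialize (Hz 0%nat); lra).
  set (d := e / (8 * (eps + 1))).
  assert (Hd : 0 < d) by (unfold d; apply Rdiv_lt_0_compat; lra).
  destruct (cconv_tail a Ha d Hd) as [K HK]. exists K. intros m m' Hm1 Hm2.
  pose proof (abel_tail a z d eps K (fun j => HK K j (le_n _)) Hz Hm (m - K)) as T1.
  pose proof (abel_tail a z d eps K (fun j => HK K j (le_n _)) Hz Hm (m' - K)) as T2.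
  replace (K + (m - K))%nat with m in T1 by lia. replace (K + (m' - K))%nat with m' in T2 by lia.
  eapply Rle_lt_trans. apply (Cmod_tri3 _ (psum (fun k => Cmult (a k) (RtoC (z k))) K)).
  rewrite (Cmod_sym _ (psum (fun k => Cmult (a k) (RtoC (z k))) m')).
  assert (2 * d * eps < e / 2).
  { unfold d. apply (Rmult_lt_reg_r (8 * (eps+1))); [lra|]. field_simplify; nra. }
  lra.
Qed.

Lemma abel_tail_sum a z H eps K : cconv a ->
  (forall j, Cmod (Cminus (psum a (K + j)) (psum a K)) <= H) ->
  (forall k, 0 <= z k <= eps) -> (forall k, z k <= z (S k)) ->
  Cmod (Cminus (csum (fun k => Cmult (a k) (RtoC (z k)))) (psum (fun k => Cmult (a k) (RtoC (z k))) K)) <= 2 * H * eps.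
Proof.
  intros Ha Hb Hz Hm. pose proof (cconv_csum _ (abel_conv a z eps Ha Hz Hm)) as Hs.
  apply has_csum_climit in Hs. apply (climit_le _ _ _ _ K Hs).
  intros m Hk. replace m with (K + (m - K))%nat by lia. apply abel_tail; auto.
Qed.

Lemma abel_sum a z H eps : cconv a -> (forall j, Cmod (psum a j) <= H) ->
  (forall k, 0 <= z k <= eps) -> (forall k, z k <= z (S k)) ->
  Cmod (csum (fun k => Cmult (a k) (RtoC (z k)))) <= 2 * H * eps.
Proof.
  intros Ha Hb Hz Hm. pose proof (abel_tail_sum a z H eps 0 Ha) as T. simpl in T.
  replace (csum (fun k => Cmult (a k) (RtoC (z k)))) with
    (Cminus (csum (fun k => Cmult (a k) (RtoC (z k)))) 0) by ring.
  apply T; auto. intros j. replace (Cminus (psum a j) 0) with (psum a j) by ring. auto.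
Qed.


Lemma nat_above x : exists n : nat, x < INR n.
Proof.
  destruct (Rle_dec 0 x) as [h|h].
  - destruct (nfloor_ex x h) as [n Hn]. exists (S n). rewrite S_INR. lra.
  - exists 0%nat. simpl. lra.
Qed.

Lemma has_csum_plus a b la lb : has_csum a la -> has_csum b lb ->
  has_csum (fun k => Cplus (a k) (b k)) (Cplus la lb).
Proof.
  rewrite !has_csum_climit. intros Ha Hb eps He.
  destruct (Ha (eps/2)) as [N1 H1]; [lra|]. destruct (Hb (eps/2)) as [N2 H2]; [lra|].
  exists (max N1 N2). intros m Hm. rewrite psum_plus.
  replace (Cminus (Cplus (psum a m) (psum b m)) (Cplus la lb)) with
    (Cplus (Cminus (psum a m) la) (Cminus (psum b m) lb)) by ring.
  eapply Rle_lt_trans. apply Cmod_triangle.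
  specialize (H1 m ltac:(lia)). specialize (H2 m ltac:(lia)). lra.
Qed.

Lemma has_csum_scal c a la : has_csum a la -> has_csum (fun k => Cmult c (a k)) (Cmult c la).
Proof.
  rewrite !has_csum_climit. intros Ha eps He.
  destruct (Ha (eps / (Cmod c + 1))) as [N H1].
  { apply Rdiv_lt_0_compat; [lra|]. pose proof (Cmod_ge_0 c); lra. }
  exists N. intros m Hm. rewrite psum_scal.
  replace (Cminus (Cmult c (psum a m)) (Cmult c la)) with (Cmult c (Cminus (psum a m) la)) by ring.
  rewrite Cmod_mult. specialize (H1 m Hm). pose proof (Cmod_ge_0 c).
  pose proof (Cmod_ge_0 (Cminus (psum a m) la)).
  apply Rle_lt_trans with ((Cmod c + 1) * Cmod (Cminus (psum a m) la)). nra.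
  apply (Rmult_lt_compat_l (Cmod c + 1)) in H1; [|lra].
  replace ((Cmod c + 1) * (eps / (Cmod c + 1))) with eps in H1 by (field; lra). lra.
Qed.

Lemma ex_series_cmp a b : (forall k, 0 <= a k <= b k) -> ex_series b -> ex_series a.
Proof.
  intros H Hb. refine (proj1 (bounded_ex_series a (Series b) (fun k => proj1 (H k)) _)).
  intros m. eapply Rle_trans. apply rsum_le. intros k _. apply (H k).
  apply rsum_le_Series; auto. intros k; specialize (H k); lra.
Qed.

Lemma ex_series_plusR a b : ex_series a -> ex_series b -> ex_series (fun k => a k + b k).
Proof. intros. apply (ex_series_plus a b); auto. Qed.

Lemma ex_series_scalR c a : ex_series a -> ex_series (fun k => c * a k).
Proof. intros. apply (ex_series_scal_l c a) ; auto. Qed.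

Lemma Arow_plus M x y n : cconv (fun k => Cmult (M n k) (x k)) -> cconv (fun k => Cmult (M n k) (y k)) ->
  Arow M (fun k => Cplus (x k) (y k)) n = Cplus (Arow M x n) (Arow M y n).
Proof.
  intros Hx Hy. unfold Arow. apply csum_eq.
  pose proof (has_csum_plus _ _ _ _ (cconv_csum _ Hx) (cconv_csum _ Hy)) as H.
  replace (fun k => Cmult (M n k) (Cplus (x k) (y k))) with
    (fun k => Cplus (Cmult (M n k) (x k)) (Cmult (M n k) (y k))); auto.
  apply functional_extensionality; intros; ring.
Qed.

Lemma Arow_scal M c x n : cconv (fun k => Cmult (M n k) (x k)) ->
  Arow M (fun k => Cmult c (x k)) n = Cmult c (Arow M x n).
Proof.
  intros Hx. unfold Arow. apply csum_eq.
  pose proof (has_csum_scal c _ _ (cconv_csum _ Hx)) as H.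
  replace (fun k => Cmult (M n k) (Cmult c (x k))) with
    (fun k => Cmult c (Cmult (M n k) (x k))); auto.
  apply functional_extensionality; intros; ring.
Qed.

Lemma lA_plus M x y : lA M x -> lA M y -> lA M (fun k => Cplus (x k) (y k)).
Proof.
  intros [Hx1 Hx2] [Hy1 Hy2]. split.
  - intros n. exists (Cplus (csum (fun k => Cmult (M n k) (x k))) (csum (fun k => Cmult (M n k) (y k)))).
    pose proof (has_csum_plus _ _ _ _ (cconv_csum _ (Hx1 n)) (cconv_csum _ (Hy1 n))) as H.
    replace (fun k => Cmult (M n k) (Cplus (x k) (y k))) with
      (fun k => Cplus (Cmult (M n k) (x k)) (Cmult (M n k) (y k))); auto.
    apply functional_extensionality; intros; ring.
  - apply (ex_series_cmp _ (fun n => Cmod (Arow M x n) + Cmod (Arow M y n))).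
    + intros n. split. apply Cmod_ge_0. rewrite Arow_plus; auto. apply Cmod_triangle.
    + apply ex_series_plusR; auto.
Qed.

Lemma lA_scal M c x : lA M x -> lA M (fun k => Cmult c (x k)).
Proof.
  intros [Hx1 Hx2]. split.
  - intros n. exists (Cmult c (csum (fun k => Cmult (M n k) (x k)))).
    pose proof (has_csum_scal c _ _ (cconv_csum _ (Hx1 n))) as H.
    replace (fun k => Cmult (M n k) (Cmult c (x k))) with
      (fun k => Cmult c (Cmult (M n k) (x k))); auto.
    apply functional_extensionality; intros; ring.
  - apply (ex_series_cmp _ (fun n => Cmod c * Cmod (Arow M x n))).
    + intros n. split. apply Cmod_ge_0. rewrite Arow_scal, Cmod_mult; auto. lra.
    + apply ex_series_scalR; auto.
Qed.

Definition Ffun (M : cmatrix) (u : nat -> C) (x : cseq) : C :=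
  csum (fun r => Cmult (u r) (Arow M x r)).

Lemma Ffun_props M u x : (forall r, Cmod (u r) <= 1) -> lA M x ->
  has_csum (fun r => Cmult (u r) (Arow M x r)) (Ffun M u x) /\ Cmod (Ffun M u x) <= sem_sum M x.
Proof.
  intros Hu [_ Hx]. apply abs_conv; auto. intros r. rewrite Cmod_mult.
  specialize (Hu r). pose proof (Cmod_ge_0 (Arow M x r)). pose proof (Cmod_ge_0 (u r)). nra.
Qed.

Lemma Ffun_plus M u x y : (forall r, Cmod (u r) <= 1) -> lA M x -> lA M y ->
  Ffun M u (fun k => Cplus (x k) (y k)) = Cplus (Ffun M u x) (Ffun M u y).
Proof.
  intros Hu Hx Hy. pose proof (proj1 (Ffun_props M u x Hu Hx)).
  pose proof (proj1 (Ffun_props M u y Hu Hy)).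
  unfold Ffun at 1. apply csum_eq.
  pose proof (has_csum_plus _ _ _ _ H H0).
  replace (fun r => Cmult (u r) (Arow M (fun k => Cplus (x k) (y k)) r)) with
    (fun r => Cplus (Cmult (u r) (Arow M x r)) (Cmult (u r) (Arow M y r))); auto.
  apply functional_extensionality; intros r. rewrite Arow_plus. ring.
  apply Hx. apply Hy.
Qed.

Lemma Ffun_scal M u c x : (forall r, Cmod (u r) <= 1) -> lA M x ->
  Ffun M u (fun k => Cmult c (x k)) = Cmult c (Ffun M u x).
Proof.
  intros Hu Hx. pose proof (proj1 (Ffun_props M u x Hu Hx)).
  unfold Ffun at 1. apply csum_eq.
  pose proof (has_csum_scal c _ _ H).
  replace (fun r => Cmult (u r) (Arow M (fun k => Cmult c (x k)) r)) with
    (fun r => Cmult c (Cmult (u r) (Arow M x r))); auto.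
  apply functional_extensionality; intros r. rewrite Arow_scal. ring.
  apply Hx.
Qed.

Lemma Ffun_dual A u : (forall r, Cmod (u r) <= 1) -> lA_dual A (Ffun A u).
Proof.
  intros Hu. split; [|split].
  - intros; apply Ffun_plus; auto.
  - intros; apply Ffun_scal; auto.
  - exists 1, 0%nat. intros x Hx. simpl. pose proof (proj2 (Ffun_props A u x Hu Hx)). lra.
Qed.

Definition lin_on (M : cmatrix) (f : cseq -> C) : Prop :=
  (forall x y, lA M x -> lA M y -> f (fun k => Cplus (x k) (y k)) = Cplus (f x) (f y)) /\
  (forall (c : C) x, lA M x -> f (fun k => Cmult c (x k)) = Cmult c (f x)).

Definition finsupp (x : cseq) : Prop := exists N, forall k, (N <= k)%nat -> x k = RtoC 0.

Definition sK (K : nat) : cseq := fun k => if Nat.ltb k K then RtoC 1 else RtoC 0.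

Lemma finsupp_sK K : finsupp (sK K).
Proof. exists K. intros k Hk. unfold sK. destruct (Nat.ltb_spec k K); auto; lia. Qed.

Lemma finsupp_delta i : finsupp (delta i).
Proof. exists (S i). intros k Hk. unfold delta. destruct (Nat.eqb_spec k i); auto; lia. Qed.

Lemma finsupp_plus x y : finsupp x -> finsupp y -> finsupp (fun k => Cplus (x k) (y k)).
Proof. intros [N1 H1] [N2 H2]. exists (max N1 N2). intros k Hk. rewrite H1, H2 by lia. ring. Qed.

Lemma finsupp_scal c x : finsupp x -> finsupp (fun k => Cmult c (x k)).
Proof. intros [N1 H1]. exists N1. intros k Hk. rewrite H1 by lia. ring. Qed.

Lemma finsupp_zero : finsupp (fun _ => RtoC 0).
Proof. exists 0%nat. auto. Qed.

Lemma lin_zero M f x : lin_on M f -> lA M x -> f (fun _ => RtoC 0) = RtoC 0.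
Proof.
  intros [_ Hs] Hx. specialize (Hs (RtoC 0) x Hx).
  replace (fun k => Cmult (RtoC 0) (x k)) with (fun _ : nat => RtoC 0) in Hs.
  rewrite Hs. ring. apply functional_extensionality; intros; ring.
Qed.

Lemma lin_psum M f (g : nat -> cseq) L :
  lin_on M f -> (forall x, finsupp x -> lA M x) -> (forall t, finsupp (g t)) ->
  finsupp (fun k => psum (fun t => g t k) L) /\
  f (fun k => psum (fun t => g t k) L) = psum (fun t => f (g t)) L.
Proof.
  intros Hf Hfin Hg. induction L as [|L IH].
  - simpl. split. apply finsupp_zero. apply (lin_zero M f (fun _ => RtoC 0)); auto. apply Hfin, finsupp_zero.
  - destruct IH as [IH1 IH2]. simpl. split. apply finsupp_plus; auto.
    rewrite (proj1 Hf); auto. rewrite IH2. auto.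
Qed.

Lemma sK_S K : sK (S K) = fun k => Cplus (sK K k) (delta K k).
Proof.
  apply functional_extensionality; intros k. unfold sK, delta.
  destruct (Nat.ltb_spec k (S K)), (Nat.ltb_spec k K), (Nat.eqb_spec k K); try lia; try ring.
Qed.

Lemma lin_sK M f K : lin_on M f -> (forall x, finsupp x -> lA M x) ->
  f (sK K) = psum (fun i => f (delta i)) K.
Proof.
  intros Hf Hfin. induction K as [|K IH].
  - simpl. replace (sK 0) with (fun _ : nat => RtoC 0).
    apply (lin_zero M f (fun _ => RtoC 0)); auto. apply Hfin, finsupp_zero.
    apply functional_extensionality; intros k; unfold sK; destruct (Nat.ltb_spec k 0); auto; lia.
  - rewrite sK_S. rewrite (proj1 Hf). rewrite IH. auto.
    apply Hfin, finsupp_sK. apply Hfin, finsupp_delta.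
Qed.

Definition mC (p q : nat -> nat) (n : nat) : cseq :=
  fun k => Cmult (RtoC (/ INR (q n - p n))) (psum (fun t => sK (S (p n) + t) k) (q n - p n)).

Lemma finsupp_psum (g : nat -> cseq) L : (forall t, finsupp (g t)) ->
  finsupp (fun k => psum (fun t => g t k) L).
Proof.
  intros Hg. induction L as [|L IH]; simpl. apply finsupp_zero. apply finsupp_plus; auto.
Qed.

Lemma finsupp_mC p q n : finsupp (mC p q n).
Proof.
  unfold mC. apply finsupp_scal. apply finsupp_psum. intros; apply finsupp_sK.
Qed.

Lemma dc_mean_eq M f p q n : lin_on M f -> (forall x, finsupp x -> lA M x) ->
  dc_mean p q f n = f (mC p q n).
Proof.
  intros Hf Hfin. unfold dc_mean, mC.
  rewrite (proj2 Hf). f_equal.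
  rewrite (proj2 (lin_psum M f (fun t => sK (S (p n) + t)) (q n - p n) Hf Hfin (fun t => finsupp_sK _))).
  apply psum_ext. intros t _. symmetry. apply (lin_sK M); auto.
  apply Hfin. apply finsupp_psum. intros; apply finsupp_sK.
Qed.


Lemma psum_sK_count c L k : psum (fun t => sK (c + t) k) L = RtoC (INR (L - (k + 1 - c))).
Proof.
  induction L as [|L IH]. simpl. f_equal.
  change (psum (fun t => sK (c + t) k) (S L)) with (Cplus (psum (fun t => sK (c+t) k) L) (sK (c+L) k)).
  rewrite IH. unfold sK. destruct (Nat.ltb_spec k (c + L)).
  - replace (S L - (k + 1 - c))%nat with (S (L - (k + 1 - c))) by lia. rewrite S_INR.
    rewrite RtoC_plus. auto.
  - replace (S L - (k + 1 - c))%nat with 0%nat by lia. replace (L - (k + 1 - c))%nat with 0%nat by lia.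
    simpl. unfold RtoC, Cplus. simpl. f_equal; ring.
Qed.

Definition mR (p q : nat -> nat) n k : R := / INR (q n - p n) * INR ((q n - p n) - (k - p n)).
Definition yR (p q : nat -> nat) n k : R := 1 - mR p q n k.

Lemma mC_eq p q n k : mC p q n k = RtoC (mR p q n k).
Proof.
  unfold mC, mR. rewrite psum_sK_count. replace (k + 1 - S (p n))%nat with (k - p n)%nat by lia.
  rewrite RtoC_mult. auto.
Qed.

Lemma Lpos (p q : nat -> nat) n : (p n < q n)%nat -> 0 < INR (q n - p n).
Proof. intros. apply lt_0_INR. lia. Qed.

Lemma yR_bounds p q n k : (p n < q n)%nat -> 0 <= yR p q n k <= 1.
Proof.
  intros H. pose proof (Lpos p q n H). unfold yR, mR.
  assert (INR (q n - p n - (k - p n)) <= INR (q n - p n)) by (apply le_INR; lia).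
  pose proof (pos_INR (q n - p n - (k - p n))).
  assert (0 <= / INR (q n - p n) * INR (q n - p n - (k - p n)) <= 1).
  { split. apply Rmult_le_pos; auto. apply Rlt_le, Rinv_0_lt_compat; auto.
    apply (Rmult_le_reg_l (INR (q n - p n))); auto. rewrite <- Rmult_assoc, Rinv_r by lra. lra. }
  lra.
Qed.

Lemma yR_mono p q n k : (p n < q n)%nat -> yR p q n k <= yR p q n (S k).
Proof.
  intros H. pose proof (Lpos p q n H). unfold yR, mR.
  assert (INR (q n - p n - (S k - p n)) <= INR (q n - p n - (k - p n))) by (apply le_INR; lia).
  assert (0 < / INR (q n - p n)) by (apply Rinv_0_lt_compat; auto). nra.
Qed.

Lemma yR_bound_k p q n k : (p n < q n)%nat -> (k < q n)%nat ->
  yR p q n k * INR (q n - k) <= INR k.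
Proof.
  intros H Hk. pose proof (Lpos p q n H). unfold yR, mR.
  set (L := (q n - p n)%nat) in *. set (a := (L - (k - p n))%nat).
  assert (E : 1 - / INR L * INR a = INR (L - a) / INR L).
  { rewrite minus_INR by (unfold a; lia). field. lra. }
  rewrite E.
  assert (Hn : ((L - a) * (q n - k) <= k * L)%nat).
  { destruct (le_lt_dec k (p n)).
    - assert (E0 : (L - a = 0)%nat) by (unfold a, L; lia). rewrite E0. simpl. lia.
    - apply Nat.mul_le_mono; unfold a, L; lia. }
  apply le_INR in Hn. rewrite !mult_INR in Hn.
  apply (Rmult_le_reg_r (INR L)); auto. unfold Rdiv.
  replace (INR (L - a) * / INR L * INR (q n - k) * INR L) with (INR (L - a) * INR (q n - k)) by (field; lra).
  lra.
Qed.

Lemma yR_small p q (hpq : forall n, (p n < q n)%nat)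
  (hq : forall M : nat, exists N : nat, forall n, (N <= n)%nat -> (M <= q n)%nat) k eps :
  0 < eps -> exists N, forall n, (N <= n)%nat -> yR p q n k <= eps.
Proof.
  intros He. destruct (nat_above (INR k / eps)) as [M HM].
  destruct (hq (k + M + 1)%nat) as [N HN]. exists N. intros n Hn. specialize (HN n Hn).
  pose proof (yR_bound_k p q n k (hpq n) ltac:(lia)).
  pose proof (yR_bounds p q n k (hpq n)).
  assert (INR M <= INR (q n - k)) by (apply le_INR; lia).
  assert (0 <= INR k) by apply pos_INR.
  assert (INR k < eps * INR M).
  { apply (Rmult_lt_compat_l eps) in HM; auto. replace (eps * (INR k / eps)) with (INR k) in HM by (field; lra). lra. }
  assert (0 < INR M) by nra.
  destruct (Rle_dec (yR p q n k) eps); auto. nra.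
Qed.

Definition yC p q n : cseq := fun k => RtoC (yR p q n k).

Lemma e_split p q n : e_seq = (fun k => Cplus (mC p q n k) (yC p q n k)).
Proof.
  apply functional_extensionality; intros k. unfold e_seq, yC, yR. rewrite mC_eq.
  unfold RtoC, Cplus; simpl. f_equal; ring.
Qed.


Lemma nondec_le (z : nat -> R) k m : (forall k, z k <= z (S k)) -> (k <= m)%nat -> z k <= z m.
Proof. intros H Hk. induction Hk; [lra|]. specialize (H m). lra. Qed.

Lemma row_to_zero a (z : nat -> nat -> R) : cconv a ->
  (forall n k, 0 <= z n k <= 1) -> (forall n k, z n k <= z n (S k)) ->
  (forall k eps, 0 < eps -> exists N, forall n, (N <= n)%nat -> z n k <= eps) ->
  climit (fun n => csum (fun k => Cmult (a k) (RtoC (z n k)))) (RtoC 0).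
Proof.
  intros Ha Hz Hm Hs eps He.
  destruct (cconv_tail a Ha (eps/4)) as [K HK]; [lra|].
  set (S0 := rsum (fun k => Cmod (a k)) K).
  assert (HS0 : 0 <= S0) by (apply rsum_nonneg; intros; apply Cmod_ge_0).
  destruct (Hs K (eps / (4 * (S0 + 1)))) as [N HN]. { apply Rdiv_lt_0_compat; lra. }
  exists N. intros n Hn.
  replace (Cminus (csum (fun k => Cmult (a k) (RtoC (z n k)))) (RtoC 0)) with
    (Cplus (Cminus (csum (fun k => Cmult (a k) (RtoC (z n k)))) (psum (fun k => Cmult (a k) (RtoC (z n k))) K))
           (psum (fun k => Cmult (a k) (RtoC (z n k))) K)) by ring.
  eapply Rle_lt_trans. apply Cmod_triangle.
  pose proof (abel_tail_sum a (z n) (eps/4) 1 K Ha (fun j => HK K j (le_n _)) (Hz n) (Hm n)) as T1.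
  assert (T2 : Cmod (psum (fun k => Cmult (a k) (RtoC (z n k))) K) <= S0 * z n K).
  { eapply Rle_trans. apply (Cmod_psum_le _ (fun k => Cmod (a k) * z n k)).
    intros k. rewrite Cmod_mult, Cmod_R, Rabs_pos_eq by apply Hz. lra.
    unfold S0. rewrite Rmult_comm, <- rsum_scal. apply rsum_le. intros k Hk.
    pose proof (nondec_le (z n) k K (Hm n) ltac:(lia)). pose proof (Cmod_ge_0 (a k)). nra. }
  specialize (HN n Hn).
  assert (S0 * z n K <= eps / 4).
  { apply Rle_trans with (S0 * (eps / (4 * (S0 + 1)))). apply Rmult_le_compat_l; auto.
    apply (Rmult_le_reg_r (4 * (S0 + 1))); [lra|]. field_simplify; nra. }
  lra.
Qed.

Lemma rsum_limit (U : nat -> nat -> C) (l : nat -> C) R :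
  (forall r, (r < R)%nat -> climit (fun I => U I r) (l r)) ->
  rlimit (fun I => rsum (fun r => Cmod (U I r)) R) (rsum (fun r => Cmod (l r)) R).
Proof.
  induction R as [|R IH]; intros H eps He.
  - exists 0%nat. intros; simpl. rewrite Rminus_0_r, Rabs_R0. lra.
  - destruct (IH (fun r Hr => H r ltac:(lia)) (eps/2)) as [N1 H1]; [lra|].
    destruct (H R ltac:(lia) (eps/2)) as [N2 H2]; [lra|].
    exists (max N1 N2). intros m Hm. simpl.
    specialize (H1 m ltac:(lia)). specialize (H2 m ltac:(lia)).
    pose proof (Cmod_tri3 (U m R) (l R) 0). pose proof (Cmod_tri3 (l R) (U m R) 0).
    replace (Cminus (U m R) 0) with (U m R) in H0 by ring. replace (Cminus (l R) 0) with (l R) in H0, H3 by ring.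
    replace (Cminus (U m R) 0) with (U m R) in H3 by ring. rewrite Cmod_sym in H3.
    apply Rabs_def2 in H1. apply Rabs_def1; lra.
Qed.

Lemma rsum_swap (f : nat -> nat -> R) I R :
  rsum (fun r => rsum (fun i => f i r) I) R = rsum (fun i => rsum (fun r => f i r) R) I.
Proof.
  induction R as [|R IH]; simpl.
  - induction I as [|I IHI]; simpl. reflexivity. simpl in IHI. rewrite <- IHI. ring.
  - rewrite IH. rewrite <- rsum_plus. apply rsum_ext. intros; simpl; auto.
Qed.

Lemma rsum_split_at g I i : (i < I)%nat ->
  rsum g I = g i + rsum (fun j => if Nat.eqb j i then 0 else g j) I.
Proof.
  induction I as [|I IH]; intros Hi. lia. simpl.
  destruct (Nat.eqb_spec I i).
  - subst. rewrite (rsum_ext (fun j => if Nat.eqb j i then 0 else g j) g i). ring. intros k Hk. destruct (Nat.eqb_spec k i); auto. lia.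
  - rewrite IH by lia. ring.
Qed.

Lemma psum_split_at g I i : (i < I)%nat ->
  psum g I = Cplus (g i) (psum (fun j => if Nat.eqb j i then RtoC 0 else g j) I).
Proof.
  induction I as [|I IH]; intros Hi. lia. simpl.
  destruct (Nat.eqb_spec I i).
  - subst. rewrite (psum_ext (fun j => if Nat.eqb j i then RtoC 0 else g j) g i). ring. intros k Hk. destruct (Nat.eqb_spec k i); auto. lia.
  - rewrite IH by lia. ring.
Qed.

Lemma half_pow_pos i : 0 < (/2)^i.
Proof. apply pow_lt. lra. Qed.

Lemma rsum_geom I : rsum (fun i => (/2)^i) I = 2 - 2 * (/2)^I.
Proof. induction I; simpl. lra. rewrite IHI. field. Qed.

Lemma rsum_geom_le I : rsum (fun i => (/2)^i) I <= 2.
Proof. rewrite rsum_geom. pose proof (half_pow_pos I). lra. Qed.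

Lemma half_pow_small eps : 0 < eps -> exists I, forall J, (I <= J)%nat -> (/2)^J < eps.
Proof.
  intros He. destruct (nat_above (/eps)) as [I HI]. exists I. intros J HJ.
  assert (forall n, INR n + 1 <= 2 ^ n).
  { induction n as [|n IHn]. simpl; lra. rewrite S_INR. simpl. pose proof (pos_INR n). lra. }
  assert (INR I <= INR J) by (apply le_INR; auto).
  specialize (H J). rewrite <- Rinv_pow by lra.
  assert (0 < 2 ^ J) by (apply pow_lt; lra).
  apply (Rmult_lt_reg_l (2^J)); auto. rewrite Rinv_r by lra.
  assert (Hk : /eps < 2^J) by lra.
  apply (Rmult_lt_compat_l eps) in Hk; auto. rewrite Rinv_r in Hk by lra. lra.
Qed.

Lemma Series_shift b I : ex_series b -> Series (fun j => b (I + j)%nat) = Series b - rsum b I.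
Proof.
  intros H. apply rlimit_Series. intros eps He. destruct (Series_rlimit b H eps He) as [N HN].
  exists N. intros m Hm. specialize (HN (I + m)%nat ltac:(lia)). rewrite rsum_add in HN.
  replace (rsum (fun k => b (I + k)%nat) m - (Series b - rsum b I)) with
    (rsum b I + rsum (fun k => b (I + k)%nat) m - Series b) by ring. auto.
Qed.

Lemma ex_series_geom_half : ex_series (fun i => (/2)^i).
Proof. apply ex_series_geom. rewrite Rabs_pos_eq; lra. Qed.

Lemma Series_geom_half : Series (fun i => (/2)^i) = 2.
Proof. rewrite Series_geom. field. rewrite Rabs_pos_eq; lra. Qed.


Definition xsum (Y : nat -> nat -> R) (k : nat) : R := Series (fun i => (/2)^i * Y i k).
Definition xtail (Y : nat -> nat -> R) (I k : nat) : R := Series (fun j => (/2)^(I+j) * Y (I+j)%nat k).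

Lemma xsum_ex (Y : nat -> nat -> R) k : (forall i k, 0 <= Y i k <= 1) -> ex_series (fun i => (/2)^i * Y i k).
Proof.
  intros HY. apply (ex_series_cmp _ (fun i => (/2)^i)). intros i. pose proof (half_pow_pos i).
  specialize (HY i k). split; nra. apply ex_series_geom_half.
Qed.

Lemma xtail_eq (Y : nat -> nat -> R) I k : (forall i k, 0 <= Y i k <= 1) ->
  xtail Y I k = xsum Y k - rsum (fun i => (/2)^i * Y i k) I.
Proof. intros HY. unfold xtail, xsum. rewrite <- Series_shift; auto. apply xsum_ex; auto. Qed.

Lemma xtail_bounds (Y : nat -> nat -> R) I k : (forall i k, 0 <= Y i k <= 1) -> 0 <= xtail Y I k <= 2 * (/2)^I.
Proof.
  intros HY. unfold xtail.
  assert (Hex : ex_series (fun j => (/2)^(I+j))).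
  { apply (ex_series_ext (fun j => (/2)^I * (/2)^j)). intros; rewrite pow_add; auto.
    apply ex_series_scalR, ex_series_geom_half. }
  assert (Hex2 : ex_series (fun j => (/2)^(I+j) * Y (I+j)%nat k)).
  { apply (ex_series_cmp _ (fun j => (/2)^(I+j))); auto. intros j. pose proof (half_pow_pos (I+j)). specialize (HY (I+j)%nat k). split; nra. }
  split.
  - apply Series_nonneg; auto. intros j. pose proof (half_pow_pos (I+j)). specialize (HY (I+j)%nat k). nra.
  - eapply Rle_trans. apply Series_le; [|exact Hex].
    intros j. pose proof (half_pow_pos (I+j)). specialize (HY (I+j)%nat k). split; nra.
    rewrite (Series_ext _ (fun j => (/2)^I * (/2)^j)) by (intros; rewrite pow_add; auto).
    rewrite Series_scal_l. change (pow (/2)) with (fun i => (/2)^i). rewrite Series_geom_half. lra.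
Qed.

Lemma xtail_mono (Y : nat -> nat -> R) I k : (forall i k, 0 <= Y i k <= 1) -> (forall i k, Y i k <= Y i (S k)) ->
  xtail Y I k <= xtail Y I (S k).
Proof.
  intros HY Hm. unfold xtail. apply Series_le.
  intros j. pose proof (half_pow_pos (I+j)). specialize (HY (I+j)%nat k). specialize (Hm (I+j)%nat k). split; nra.
  apply (ex_series_cmp _ (fun j => (/2)^(I+j))).
  intros j. pose proof (half_pow_pos (I+j)). specialize (HY (I+j)%nat (S k)). split; nra.
  apply (ex_series_ext (fun j => (/2)^I * (/2)^j)). intros; rewrite pow_add; auto.
  apply ex_series_scalR, ex_series_geom_half.
Qed.

Lemma xsum_tail0 (Y : nat -> nat -> R) k : xsum Y k = xtail Y 0 k.
Proof. reflexivity. Qed.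

Lemma has_csum_finlin a (Y : nat -> nat -> R) eps I : cconv a ->
  (forall i k, 0 <= Y i k <= eps) -> (forall i k, Y i k <= Y i (S k)) ->
  has_csum (fun k => Cmult (a k) (RtoC (rsum (fun i => (/2)^i * Y i k) I)))
    (psum (fun i => Cmult (RtoC ((/2)^i)) (csum (fun k => Cmult (a k) (RtoC (Y i k))))) I).
Proof.
  intros Ha HY Hm. induction I as [|I IH]; simpl.
  - apply has_csum_climit. intros e He. exists 0%nat. intros m _.
    rewrite (psum_ext _ (fun _ => RtoC 0)). replace (Cminus (psum (fun _ => RtoC 0) m) (RtoC 0)) with (psum (fun _ => RtoC 0) m) by ring.
    rewrite psum_RtoC. rewrite Cmod_R. replace (rsum (fun _ => 0) m) with 0. rewrite Rabs_R0; lra.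
    clear. induction m; simpl; lra. intros; unfold RtoC, Cmult; simpl; f_equal; ring.
  - pose proof (has_csum_plus _ _ _ _ IH (has_csum_scal (RtoC ((/2)^I)) _ _ (cconv_csum _ (abel_conv a (Y I) eps Ha (HY I) (Hm I))))).
    replace (fun k => Cmult (a k) (RtoC (rsum (fun i => (/2)^i * Y i k) I + (/2)^I * Y I k))) with
      (fun k => Cplus (Cmult (a k) (RtoC (rsum (fun i => (/2)^i * Y i k) I)))
                      (Cmult (RtoC ((/2)^I)) (Cmult (a k) (RtoC (Y I k))))); auto.
    apply functional_extensionality; intros k. rewrite RtoC_plus, RtoC_mult. ring.
Qed.

Lemma interchange a (Y : nat -> nat -> R) : cconv a ->
  (forall i k, 0 <= Y i k <= 1) -> (forall i k, Y i k <= Y i (S k)) ->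
  cconv (fun k => Cmult (a k) (RtoC (xsum Y k))) /\
  climit (psum (fun i => Cmult (RtoC ((/2)^i)) (csum (fun k => Cmult (a k) (RtoC (Y i k))))))
     (csum (fun k => Cmult (a k) (RtoC (xsum Y k)))).
Proof.
  intros Ha HY Hm.
  assert (Hxc : forall I, cconv (fun k => Cmult (a k) (RtoC (xtail Y I k)))).
  { intros I. apply (abel_conv a _ (2 * (/2)^I)); auto. intros; apply xtail_bounds; auto.
    intros; apply xtail_mono; auto. }
  split. exact (Hxc 0%nat).
  destruct (cconv_bounded a Ha) as [H HH].
  assert (H0 : 0 <= H) by (specialize (HH 0%nat); simpl in HH; rewrite Cmod_0 in HH; lra).
  intros eps He. destruct (half_pow_small (eps / (4 * (H + 1)))) as [I0 HI0].
  { apply Rdiv_lt_0_compat; lra. }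
  exists I0. intros I HI.
  pose proof (has_csum_finlin a Y 1 I Ha HY Hm) as F1.
  pose proof (cconv_csum _ (Hxc I)) as F2.
  pose proof (has_csum_plus _ _ _ _ F1 F2) as F3.
  assert (E : (fun k => Cmult (a k) (RtoC (xsum Y k))) =
    (fun k => Cplus (Cmult (a k) (RtoC (rsum (fun i => (/2)^i * Y i k) I))) (Cmult (a k) (RtoC (xtail Y I k))))).
  { apply functional_extensionality; intros k. rewrite xtail_eq by auto. rewrite RtoC_minus. ring. }
  rewrite E.
  rewrite (csum_eq _ _ F3).
  replace (Cminus _ _) with (Copp (csum (fun k => Cmult (a k) (RtoC (xtail Y I k))))) by ring.
  rewrite Cmod_opp. eapply Rle_lt_trans. apply (abel_sum a _ H (2 * (/2)^I)); auto.
  intros; apply xtail_bounds; auto. intros; apply xtail_mono; auto.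
  specialize (HI0 I HI).
  apply Rle_lt_trans with (4 * (H + 1) * (/2)^I). pose proof (half_pow_pos I). nra.
  apply (Rmult_lt_compat_l (4 * (H+1))) in HI0; [|lra].
  replace (4 * (H + 1) * (eps / (4 * (H + 1)))) with eps in HI0 by (field; lra). lra.
Qed.


Lemma construct (P : nat -> nat -> nat -> Prop) (Q : nat -> nat -> nat -> Prop) :
  (forall i R, exists n, P i R n) -> (forall n R, exists R', (R < R')%nat /\ Q n R R') ->
  exists ns Rs : nat -> nat, Rs 0%nat = 0%nat /\
    forall i, P i (Rs i) (ns i) /\ (Rs i < Rs (S i))%nat /\ Q (ns i) (Rs i) (Rs (S i)).
Proof.
  intros HP HQ.
  pose (g := fun i R => proj1_sig (constructive_indefinite_description _ (HP i R))).
  pose (h := fun n R => proj1_sig (constructive_indefinite_description _ (HQ n R))).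
  pose (Rs := fix Rs (i : nat) : nat := match i with O => O | S i' => h (g i' (Rs i')) (Rs i') end).
  exists (fun i => g i (Rs i)), Rs. split. reflexivity.
  intros i. split.
  - unfold g. apply (proj2_sig (constructive_indefinite_description _ (HP i (Rs i)))).
  - change (Rs (S i)) with (h (g i (Rs i)) (Rs i)). unfold h.
    apply (proj2_sig (constructive_indefinite_description _ (HQ (g i (Rs i)) (Rs i)))).
Qed.

Lemma Rs_mono (Rs : nat -> nat) : (forall i, (Rs i < Rs (S i))%nat) ->
  forall i j, (i <= j)%nat -> (Rs i <= Rs j)%nat.
Proof. intros H i j Hij. induction Hij; auto. specialize (H m). lia. Qed.

Lemma Rs_ge (Rs : nat -> nat) : (forall i, (Rs i < Rs (S i))%nat) -> forall i, (i <= Rs i)%nat.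
Proof. intros H i. induction i; [lia|]. specialize (H i). lia. Qed.

Lemma blk_exists (Rs : nat -> nat) : Rs 0%nat = 0%nat -> (forall i, (Rs i < Rs (S i))%nat) ->
  exists blk : nat -> nat, forall r i, (Rs i <= r < Rs (S i))%nat -> blk r = i.
Proof.
  intros H0 H.
  assert (Hex : forall r, exists i, (Rs i <= r < Rs (S i))%nat).
  { intros r. assert (forall m, (r < Rs m)%nat -> exists i, (Rs i <= r < Rs (S i))%nat).
    { induction m; intros Hm. lia. destruct (le_lt_dec (Rs m) r). exists m; lia. auto. }
    apply (H1 (S r)). pose proof (Rs_ge Rs H (S r)). lia. }
  exists (fun r => proj1_sig (constructive_indefinite_description _ (Hex r))).
  intros r i Hi. destruct (constructive_indefinite_description _ (Hex r)) as [j Hj]. simpl.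
  destruct (lt_eq_lt_dec i j) as [[h|h]|h]; auto.
  - pose proof (Rs_mono Rs H (S i) j h). lia.
  - pose proof (Rs_mono Rs H (S j) i h). lia.
Qed.

Lemma rsum_zero R : rsum (fun _ => 0) R = 0.
Proof. induction R; simpl; auto. rewrite IHR. ring. Qed.

Lemma eventually_rsum_small (w : nat -> nat -> C) R : (forall r, climit (fun n => w n r) (RtoC 0)) ->
  forall eps, 0 < eps -> exists N, forall n, (N <= n)%nat -> rsum (fun r => Cmod (w n r)) R <= eps.
Proof.
  intros H eps He. pose proof (rsum_limit w (fun _ => RtoC 0) R (fun r _ => H r)) as L.
  rewrite (rsum_ext _ (fun _ => 0)) in L by (intros; rewrite Cmod_0; auto). rewrite rsum_zero in L.
  destruct (L eps He) as [N HN]. exists N. intros n Hn. specialize (HN n Hn).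
  rewrite Rminus_0_r in HN. apply Rabs_def2 in HN. lra.
Qed.

Lemma Rabs_def2b x y : Rabs x <= y -> -y <= x <= y.
Proof. unfold Rabs. destruct (Rcase_abs x); intros; lra. Qed.

Definition sgn (z : C) : C := if Req_EM_T (Cmod z) 0 then RtoC 0 else Cmult (Cconj z) (RtoC (/ Cmod z)).

Lemma sgn_bound z : Cmod (sgn z) <= 1.
Proof.
  unfold sgn. destruct (Req_EM_T (Cmod z) 0). rewrite Cmod_0; lra.
  rewrite Cmod_mult, Cmod_conj, Cmod_R. pose proof (Cmod_ge_0 z).
  rewrite Rabs_pos_eq by (apply Rlt_le, Rinv_0_lt_compat; lra). rewrite Rinv_r; lra.
Qed.

Lemma sgn_mult z : Cmult (sgn z) z = RtoC (Cmod z).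
Proof.
  unfold sgn. destruct (Req_EM_T (Cmod z) 0). rewrite e. ring.
  replace (Cmult (Cmult (Cconj z) (RtoC (/ Cmod z))) z) with (Cmult (Cmult z (Cconj z)) (RtoC (/ Cmod z))) by ring.
  rewrite <- Cmod2_conj. rewrite <- RtoC_mult. f_equal. field. auto.
Qed.

Lemma Re_lb u z : Cmod u <= 1 -> - Cmod z <= Re (Cmult u z).
Proof.
  intros H. pose proof (re_le_Cmod (Cmult u z)). rewrite Cmod_mult in H0.
  pose proof (Cmod_ge_0 z). pose proof (Cmod_ge_0 u). apply Rabs_def2b in H0. nra.
Qed.

Lemma has_csum_Re a l : has_csum a l -> rlimit (rsum (fun k => Re (a k))) (Re l).
Proof.
  intros H. apply has_csum_climit in H. intros eps He. destruct (H eps He) as [N HN].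
  exists N. intros m Hm. rewrite <- psum_Re. eapply Rle_lt_trans; [|apply (HN m Hm)].
  replace (Re (psum a m) - Re l) with (Re (Cminus (psum a m) l)) by (unfold Cminus, Cplus, Copp, Re; simpl; ring).
  apply re_le_Cmod.
Qed.

Lemma rlimit_minus u v lu lv : rlimit u lu -> rlimit v lv -> rlimit (fun m => u m - v m) (lu - lv).
Proof.
  intros Hu Hv eps He. destruct (Hu (eps/2)) as [N1 H1]; [lra|]. destruct (Hv (eps/2)) as [N2 H2]; [lra|].
  exists (max N1 N2). intros m Hm. specialize (H1 m ltac:(lia)). specialize (H2 m ltac:(lia)).
  apply Rabs_def2 in H1. apply Rabs_def2 in H2. apply Rabs_def1; lra.
Qed.

Lemma rsum_ind_lt (a : nat -> R) R m : (R <= m)%nat -> rsum (fun r => if Nat.ltb r R then a r else 0) m = rsum a R.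
Proof.
  intros H. induction H; simpl.
  - apply rsum_ext. intros k Hk. destruct (Nat.ltb_spec k R); auto; lia.
  - destruct (Nat.ltb_spec m R); [lia|]. rewrite IHle. ring.
Qed.

Lemma rsum_ind_ge (a : nat -> R) R m : (R <= m)%nat -> rsum (fun r => if Nat.leb R r then a r else 0) m = rsum a m - rsum a R.
Proof.
  intros H. induction H; simpl.
  - rewrite (rsum_ext _ (fun _ => 0)). rewrite rsum_zero. ring. intros k Hk. destruct (Nat.leb_spec R k); auto; lia.
  - destruct (Nat.leb_spec R m); [|lia]. rewrite IHle. ring.
Qed.

Lemma hump1 (w : nat -> nat -> C) :
  (forall n, ex_series (fun r => Cmod (w n r))) ->
  (forall r, climit (fun n => w n r) (RtoC 0)) ->
  (forall u : nat -> C, (forall r, Cmod (u r) <= 1) ->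
     climit (fun n => csum (fun r => Cmult (u r) (w n r))) (RtoC 0)) ->
  exists B N0, forall n, (N0 <= n)%nat -> Series (fun r => Cmod (w n r)) <= B.
Proof.
  intros Hw Hpt Hu. apply NNPP. intro Hneg.
  assert (Hfreq : forall B N0, exists n, (N0 <= n)%nat /\ B < Series (fun r => Cmod (w n r))).
  { intros B N0. apply NNPP. intro H. apply Hneg. exists B, N0. intros n Hn.
    apply Rnot_lt_le. intro. apply H. eauto. }
  destruct (construct
    (fun i R n => (i <= n)%nat /\ rsum (fun r => Cmod (w n r)) R <= 1 /\ INR i + 4 < Series (fun r => Cmod (w n r)))
    (fun n R R' => Series (fun r => Cmod (w n r)) - rsum (fun r => Cmod (w n r)) R' <= 1)) as [ns [Rs [HR0 HRs]]].
  { intros i R. destruct (eventually_rsum_small w R Hpt 1) as [N1 HN1]; [lra|].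
    destruct (Hfreq (INR i + 4) (max N1 i)) as [n [Hn1 Hn2]]. exists n. repeat split; auto; try lia. apply HN1; lia. }
  { intros n R. destruct (Series_rlimit _ (Hw n) 1) as [N HN]; [lra|]. exists (S (max N R)). split. lia.
    specialize (HN (S (max N R)) ltac:(lia)). apply Rabs_def2 in HN. lra. }
  assert (Hinc : forall i, (Rs i < Rs (S i))%nat) by (intros i; apply HRs).
  destruct (blk_exists Rs HR0 Hinc) as [blk Hblk].
  set (u := fun r => sgn (w (ns (blk r)) r)).
  assert (Hub : forall r, Cmod (u r) <= 1) by (intros; apply sgn_bound).
  destruct (Hu u Hub 1) as [N HN]; [lra|].
  set (i := S N). destruct (HRs i) as [[Hi1 [Hi2 Hi3]] [Hi4 Hi5]].
  set (n := ns i) in *. set (R := Rs i) in *. set (R' := Rs (S i)) in *.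
  specialize (HN n ltac:(unfold n; lia)).
  replace (Cminus (csum (fun r => Cmult (u r) (w n r))) (RtoC 0)) with (csum (fun r => Cmult (u r) (w n r))) in HN by ring.
  set (a := fun r => Cmod (w n r)).
  set (f := fun r => Re (Cmult (u r) (w n r))).
  assert (Hc : has_csum (fun r => Cmult (u r) (w n r)) (csum (fun r => Cmult (u r) (w n r)))).
  { apply (abs_conv _ a); [|apply Hw]. intros r. unfold a. rewrite Cmod_mult. specialize (Hub r).
    pose proof (Cmod_ge_0 (w n r)). pose proof (Cmod_ge_0 (u r)). nra. }
  pose proof (has_csum_Re _ _ Hc) as HRe. fold f in HRe.
  pose proof (Series_rlimit a (Hw n)) as Ha.
  assert (Hpt2 : forall r, a r - 2 * (if Nat.ltb r R then a r else 0) - 2 * (if Nat.leb R' r then a r else 0) <= f r).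
  { intros r. unfold f, a. destruct (Nat.ltb_spec r R), (Nat.leb_spec R' r).
    - pose proof (Re_lb (u r) (w n r) (Hub r)). pose proof (Cmod_ge_0 (w n r)). lra.
    - pose proof (Re_lb (u r) (w n r) (Hub r)). lra.
    - pose proof (Re_lb (u r) (w n r) (Hub r)). lra.
    - unfold u. rewrite (Hblk r i) by lia. fold n. rewrite sgn_mult. simpl. lra. }
  assert (Hlb : forall m, (R' <= m)%nat -> rsum a m - 4 <= rsum f m).
  { intros m Hm. eapply Rle_trans; [|apply rsum_le; intros k _; apply Hpt2].

    replace (rsum (fun k => a k - 2 * (if Nat.ltb k R then a k else 0) - 2 * (if Nat.leb R' k then a k else 0)) m)
      with (rsum a m - 2 * rsum (fun k => if Nat.ltb k R then a k else 0) m - 2 * rsum (fun k => if Nat.leb R' k then a k else 0) m).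
    2:{ rewrite (rsum_ext (fun k => a k - 2 * (if Nat.ltb k R then a k else 0) - 2 * (if Nat.leb R' k then a k else 0)) (fun k => (a k + (-2) * (if Nat.ltb k R then a k else 0)) + (-2) * (if Nat.leb R' k then a k else 0))) by (intros; ring).
        rewrite !rsum_plus, !rsum_scal. ring. }
    rewrite rsum_ind_lt by lia. rewrite rsum_ind_ge by lia.
    assert (rsum a m <= Series a) by (apply rsum_le_Series; [intros; apply Cmod_ge_0| apply Hw]).
    unfold a in *. lra. }
  assert (HRe' : rlimit (rsum f) (Re (csum (fun r => Cmult (u r) (w n r))))) by exact HRe.
  pose proof (rlimit_ge (fun m => rsum f m - rsum a m) _ R' (-4) (rlimit_minus _ _ _ _ HRe' Ha)) as Hfin.
  assert (-4 <= Re (csum (fun r => Cmult (u r) (w n r))) - Series a) by (apply Hfin; intros m Hm; specialize (Hlb m Hm); lra).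
  pose proof (re_le_Cmod (csum (fun r => Cmult (u r) (w n r)))). apply Rabs_def2b in H0.
  assert (1 <= INR i) by (unfold i; rewrite S_INR; pose proof (pos_INR N); lra).
  fold a in Hi3. lra.
Qed.


Definition rowY (M : cmatrix) (Y : nat -> nat -> R) n r : C := csum (fun k => Cmult (M r k) (RtoC (Y n k))).

Lemma rsum_minus a b m : rsum (fun k => a k - b k) m = rsum a m - rsum b m.
Proof. induction m; simpl. ring. rewrite IHm. ring. Qed.

Lemma blk_le f g R R' : (R <= R')%nat -> (forall r, (R <= r < R')%nat -> g r <= f r) ->
  rsum g R' - rsum g R <= rsum f R' - rsum f R.
Proof.
  intros HR H. replace R' with (R + (R' - R))%nat by lia. rewrite !rsum_add.
  assert (rsum (fun k => g (R + k)%nat) (R' - R) <= rsum (fun k => f (R + k)%nat) (R' - R)).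
  { apply rsum_le. intros k Hk. apply H. lia. }
  lra.
Qed.

Lemma Cmod_rev_tri a b : Cmod a - Cmod b <= Cmod (Cplus a b).
Proof.
  pose proof (Cmod_triangle (Cplus a b) (Copp b)). rewrite Cmod_opp in H.
  replace (Cplus (Cplus a b) (Copp b)) with a in H by ring. lra.
Qed.

Lemma hump2 (M1 M2 : cmatrix) (Y : nat -> nat -> R) :
  (forall n k, 0 <= Y n k <= 1) -> (forall n k, Y n k <= Y n (S k)) ->
  (forall r, cconv (fun k => M1 r k)) -> (forall r, cconv (fun k => M2 r k)) ->
  (forall n, ex_series (fun r => Cmod (rowY M1 Y n r))) ->
  (forall n, ex_series (fun r => Cmod (rowY M2 Y n r))) ->
  (exists B N0, forall n, (N0 <= n)%nat -> Series (fun r => Cmod (rowY M1 Y n r)) <= B) ->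
  (forall r, climit (fun n => rowY M2 Y n r) (RtoC 0)) ->
  (forall T, exists N, forall n, (N <= n)%nat -> T <= Series (fun r => Cmod (rowY M2 Y n r))) ->
  (forall x, lA M1 x -> lA M2 x) -> False.
Proof.
  intros HY HYm H1 H2 Hw Hv [B [N0 HB]] Hpt Hgrow Hinc.
  assert (HB0 : 0 <= B).
  { specialize (HB N0 (le_n _)). pose proof (Series_nonneg _ (fun r => Cmod_ge_0 _) (Hw N0)). lra. }
  destruct (construct
    (fun i R n => (N0 <= n)%nat /\ rsum (fun r => Cmod (rowY M2 Y n r)) R <= 1 /\
        2^i * (INR i + 5) <= Series (fun r => Cmod (rowY M2 Y n r)))
    (fun n R R' => Series (fun r => Cmod (rowY M2 Y n r)) - rsum (fun r => Cmod (rowY M2 Y n r)) R' <= 1))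
    as [ns [Rs [HR0 HRs]]].
  { intros i R. destruct (eventually_rsum_small (rowY M2 Y) R Hpt 1) as [N1 HN1]; [lra|].
    destruct (Hgrow (2^i * (INR i + 5))) as [N2 HN2].
    exists (max (max N1 N2) N0). repeat split. lia. apply HN1; lia. apply HN2; lia. }
  { intros n R. destruct (Series_rlimit _ (Hv n) 1) as [N HN]; [lra|]. exists (S (max N R)). split. lia.
    specialize (HN (S (max N R)) ltac:(lia)). apply Rabs_def2 in HN. lra. }
  assert (Hinc' : forall i, (Rs i < Rs (S i))%nat) by (intros i; apply HRs).
  set (Y' := fun i k => Y (ns i) k).
  assert (HY' : forall i k, 0 <= Y' i k <= 1) by (intros; apply HY).
  assert (HYm' : forall i k, Y' i k <= Y' i (S k)) by (intros; apply HYm).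
  set (xC := fun k => RtoC (xsum Y' k)).
  set (c := fun i : nat => (/2)^i).
  assert (Hc : forall i, 0 < c i) by (intros; apply half_pow_pos).
  assert (HxA : lA M1 xC).
  { split.
    - intros r. apply (proj1 (interchange (fun k => M1 r k) Y' (H1 r) HY' HYm')).
    - refine (proj1 (bounded_ex_series _ (2 * B) (fun _ => Cmod_ge_0 _) _)). intros R.
      set (U := fun I r => psum (fun i => Cmult (RtoC (c i)) (rowY M1 Y (ns i) r)) I).
      pose proof (rsum_limit U (fun r => Arow M1 xC r) R
         (fun r _ => proj2 (interchange (fun k => M1 r k) Y' (H1 r) HY' HYm'))) as HL.
      apply (rlimit_le _ _ 0 _ HL). intros I _.
      apply Rle_trans with (rsum (fun r => rsum (fun i => c i * Cmod (rowY M1 Y (ns i) r)) I) R).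
      { apply rsum_le. intros r _. apply Cmod_psum_le. intros i. rewrite Cmod_mult, Cmod_R, Rabs_pos_eq.
        lra. apply Rlt_le, Hc. }
      rewrite rsum_swap.
      apply Rle_trans with (rsum (fun i => c i * B) I).
      { apply rsum_le. intros i _. rewrite rsum_scal. apply Rmult_le_compat_l. apply Rlt_le, Hc.
        eapply Rle_trans. apply rsum_le_Series. intros; apply Cmod_ge_0. apply Hw. apply HB. apply HRs. }
      rewrite (rsum_ext _ (fun i => B * c i)) by (intros; ring). rewrite rsum_scal.
      pose proof (rsum_geom_le I). unfold c. nra. }
  pose proof (Hinc xC HxA) as [_ HG].
  set (G := fun r => Cmod (Arow M2 xC r)) in HG.
  assert (Hblock : forall i, INR i + 1 <= rsum G (Rs (S i)) - rsum G (Rs i)).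
  { intros i. destruct (HRs i) as [[Hi1 [Hi2 Hi3]] [Hi4 Hi5]].
    set (R := Rs i) in *. set (R' := Rs (S i)) in *.
    set (V := fun j r => Cmod (rowY M2 Y (ns j) r)).
    set (U := fun I r => psum (fun j => Cmult (RtoC (c j)) (rowY M2 Y (ns j) r)) I).
    assert (HL : forall R0, rlimit (fun I => rsum (fun r => Cmod (U I r)) R0) (rsum G R0)).
    { intros R0. apply (rsum_limit U (fun r => Arow M2 xC r) R0).
      intros r _. apply (proj2 (interchange (fun k => M2 r k) Y' (H2 r) HY' HYm')). }
    refine (rlimit_ge (fun I => rsum (fun r => Cmod (U I r)) R' - rsum (fun r => Cmod (U I r)) R) _ (S i) _ (rlimit_minus _ _ _ _ (HL R') (HL R)) _).
    intros I HI.
    set (h := fun j r => if Nat.eqb j i then 0 else c j * V j r).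
    assert (Hpw : forall r, c i * V i r - rsum (fun j => h j r) I <= Cmod (U I r)).
    { intros r. unfold U. rewrite (psum_split_at _ I i) by lia.
      eapply Rle_trans; [|apply Cmod_rev_tri].
      rewrite Cmod_mult, Cmod_R, Rabs_pos_eq by (apply Rlt_le, Hc).
      apply Rplus_le_compat_l, Ropp_le_contravar. apply Cmod_psum_le.
      intros j. unfold h. destruct (Nat.eqb j i). rewrite Cmod_0; lra.
      rewrite Cmod_mult, Cmod_R, Rabs_pos_eq by (apply Rlt_le, Hc). unfold V. lra. }
    eapply Rle_trans; [|apply (blk_le (fun r => Cmod (U I r)) (fun r => c i * V i r - rsum (fun j => h j r) I) R R'); [lia| intros r _; apply Hpw]].
    assert (Elin : forall m, rsum (fun r => c i * V i r - rsum (fun j => h j r) I) m =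
        c i * rsum (V i) m - rsum (fun j => if Nat.eqb j i then 0 else c j * rsum (V j) m) I).
    { intros m. rewrite rsum_minus, rsum_scal, rsum_swap. f_equal. apply rsum_ext. intros j _.
      unfold h. destruct (Nat.eqb j i). apply rsum_zero. apply rsum_scal. }
    rewrite !Elin.
    assert (Hjb : forall j, j <> i -> rsum (V j) R' - rsum (V j) R <= 1).
    { intros j Hj. destruct (HRs j) as [[Hj1 [Hj2 Hj3]] [Hj4 Hj5]].
      assert (HVj : forall m, rsum (V j) m <= Series (V j)) by (intros; apply rsum_le_Series; [intros; apply Cmod_ge_0|apply Hv]).
      assert (HVn : forall m m', (m <= m')%nat -> rsum (V j) m <= rsum (V j) m') by (intros; apply rsum_mono; auto; intros; apply Cmod_ge_0).
      destruct (lt_eq_lt_dec j i) as [[h1|h1]|h1]; [| lia |].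
      - pose proof (Rs_mono Rs Hinc' (S j) i h1). pose proof (HVn _ _ H). pose proof (HVj R').
        unfold V in *. fold R in H0. lra.
      - pose proof (Rs_mono Rs Hinc' (S i) j h1). pose proof (HVn _ _ H).
        pose proof (rsum_nonneg (V j) R (fun _ => Cmod_ge_0 _)). unfold V in *. fold R' in H0. lra. }
    assert (Hsum : rsum (fun j => if Nat.eqb j i then 0 else c j * rsum (V j) R') I -
                   rsum (fun j => if Nat.eqb j i then 0 else c j * rsum (V j) R) I <= 2).
    { rewrite <- rsum_minus. eapply Rle_trans; [|apply (rsum_geom_le I)]. apply rsum_le. intros j _.
      destruct (Nat.eqb_spec j i). pose proof (half_pow_pos j). lra.
      specialize (Hjb j n). pose proof (Hc j). unfold c in *. nra. }
    assert (Hii : Series (V i) - 2 <= rsum (V i) R' - rsum (V i) R) by (unfold V; lra).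
    assert (Hci : c i * Series (V i) >= INR i + 5).
    { unfold c. apply Rle_ge. apply (Rmult_le_reg_l (2^i)). apply pow_lt; lra.
      rewrite <- Rmult_assoc, <- Rpow_mult_distr, Rinv_r, pow1 by lra. unfold V. lra. }
    assert (c i <= 1). { unfold c. clear. induction i as [|i IHi]; simpl; [lra|]. pose proof (half_pow_pos i). lra. }
    assert (c i * (Series (V i) - 2) <= c i * (rsum (V i) R' - rsum (V i) R)) by (apply Rmult_le_compat_l; [apply Rlt_le, Hc | lra]).
    lra. }
  assert (Htel : forall i, INR i <= rsum G (Rs i)).
  { induction i. rewrite HR0. simpl. lra. rewrite S_INR. specialize (Hblock i). pose proof (pos_INR i). lra. }
  destruct (nat_above (Series G)) as [i Hi].
  pose proof (rsum_le_Series G (Rs i) (fun _ => Cmod_ge_0 _) HG). specialize (Htel i). lra.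
Qed.


Lemma psum_delta a i m : psum (fun k => Cmult (a k) (delta i k)) m = if Nat.ltb i m then a i else RtoC 0.
Proof.
  induction m as [|m IH]. simpl. reflexivity.
  change (psum (fun k => Cmult (a k) (delta i k)) (S m)) with
    (Cplus (psum (fun k => Cmult (a k) (delta i k)) m) (Cmult (a m) (delta i m))).
  rewrite IH. unfold delta. destruct (Nat.ltb_spec i m), (Nat.ltb_spec i (S m)), (Nat.eqb_spec m i);
    try lia; subst; ring.
Qed.

Lemma Arow_delta M i r : Arow M (delta i) r = M r i.
Proof.
  unfold Arow. apply csum_eq. apply has_csum_climit. intros eps He. exists (S i). intros m Hm.
  rewrite psum_delta. destruct (Nat.ltb_spec i m); [|lia].
  replace (Cminus (M r i) (M r i)) with (RtoC 0) by ring. rewrite Cmod_0. lra.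
Qed.

Lemma rsum_arith c L : 2 * rsum (fun t => INR (c + t)) L = INR L * (2 * INR c + INR L - 1).
Proof.
  induction L as [|L IH]. simpl. ring.
  change (rsum (fun t => INR (c + t)) (S L)) with (rsum (fun t => INR (c + t)) L + INR (c + L)).
  rewrite Rmult_plus_distr_l, IH, plus_INR, S_INR. ring.
Qed.

Lemma rsum_one m : rsum (fun _ => 1) m = INR m.
Proof. induction m as [|m IH]. reflexivity. change (rsum (fun _ => 1) (S m)) with (rsum (fun _ => 1) m + 1). rewrite IH, S_INR. ring. Qed.

Lemma rows_conv M : lA M e_seq -> forall r, cconv (fun k => M r k).
Proof.
  intros [H _] r. destruct (H r) as [l Hl]. exists l.
  replace (fun k => M r k) with (fun k => Cmult (M r k) (e_seq k)); auto.
  apply functional_extensionality; intros k; unfold e_seq. ring.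
Qed.

Lemma yC_lA M p q n : lA M e_seq -> (forall x, finsupp x -> lA M x) -> lA M (yC p q n).
Proof.
  intros He Hfin.
  replace (yC p q n) with (fun k => Cplus (e_seq k) (Cmult (RtoC (-1)) (mC p q n k))).
  apply lA_plus; auto. apply lA_scal. apply Hfin, finsupp_mC.
  apply functional_extensionality; intros k. rewrite (e_split p q n). ring.
Qed.

Lemma Ffun_lin M u : (forall r, Cmod (u r) <= 1) -> lin_on M (Ffun M u).
Proof. intros Hu. split; intros; [apply Ffun_plus | apply Ffun_scal]; auto. Qed.

Lemma Ffun_y M u p q n : (forall r, Cmod (u r) <= 1) -> lA M e_seq -> (forall x, finsupp x -> lA M x) ->
  Ffun M u (yC p q n) = Cminus (Ffun M u e_seq) (dc_mean p q (Ffun M u) n).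
Proof.
  intros Hu He Hfin. rewrite (dc_mean_eq M) by (auto; apply Ffun_lin; auto).
  rewrite (e_split p q n) at 1. rewrite Ffun_plus; auto. ring.
  apply Hfin, finsupp_mC. apply yC_lA; auto.
Qed.

Theorem mainTheorem1 (p q : nat -> nat)
  (hpq : forall n, (p n < q n)%nat)
  (hq : forall M : nat, exists N : nat, forall n, (N <= n)%nat -> (M <= q n)%nat)
  (A : cmatrix)
  (hphi : forall x : cseq, (exists N, forall k, (N <= k)%nat -> x k = RtoC 0) -> lA A x)
  (he : lA A e_seq)
  (hconull : dc_conull p q A) :
  ~ l_replaceable A.
Proof.
  intros [D [hD hcol]].
  assert (hfinA : forall x, finsupp x -> lA A x) by exact hphi.
  assert (hfinD : forall x, finsupp x -> lA D x) by (intros; apply hD; auto).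
  assert (heD : lA D e_seq) by (apply hD; auto).
  set (Y := yR p q).
  assert (HY : forall n k, 0 <= Y n k <= 1) by (intros; apply yR_bounds; auto).
  assert (HYm : forall n k, Y n k <= Y n (S k)) by (intros; apply yR_mono; auto).
  assert (HYs : forall k eps, 0 < eps -> exists N, forall n, (N <= n)%nat -> Y n k <= eps)
    by (intros; apply yR_small; auto).
  assert (Hpt : forall M, lA M e_seq -> forall r, climit (fun n => rowY M Y n r) (RtoC 0)).
  { intros M HM r. apply (row_to_zero (fun k => M r k) Y); auto. apply rows_conv; auto. }
  assert (Hbound : exists B N0, forall n, (N0 <= n)%nat -> Series (fun r => Cmod (rowY A Y n r)) <= B).
  { apply hump1.
    - intros n. apply (proj2 (yC_lA A p q n he hfinA)).
    - apply Hpt; auto.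
    - intros u Hu. pose proof (hconull (Ffun A u) (Ffun_dual A u Hu)) as Hc.
      apply filterlim_climit in Hc. intros eps He. destruct (Hc eps He) as [N HN].
      exists N. intros n Hn. specialize (HN n Hn).
      change (csum (fun r => Cmult (u r) (rowY A Y n r))) with (Ffun A u (yC p q n)).
      rewrite Ffun_y; auto. rewrite Cmod_sym.
      replace (Cminus (RtoC 0) (Cminus (Ffun A u e_seq) (dc_mean p q (Ffun A u) n))) with
        (Cminus (dc_mean p q (Ffun A u) n) (Ffun A u e_seq)) by ring. auto. }
  set (F := Ffun D (fun _ => RtoC 1)).
  assert (Hu1 : forall r : nat, Cmod (RtoC 1) <= 1) by (intros; rewrite Cmod_1; lra).
  assert (HFd : forall i, F (delta i) = RtoC 1).
  { intros i. unfold F, Ffun. apply csum_eq.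
    replace (fun r => Cmult (RtoC 1) (Arow D (delta i) r)) with (fun r => D r i). apply hcol.
    apply functional_extensionality; intros r. rewrite Arow_delta. ring. }
  assert (Hmean : forall n, dc_mean p q F n =
      RtoC (/ INR (q n - p n) * rsum (fun t => INR (S (p n) + t)) (q n - p n))).
  { intros n. unfold dc_mean. rewrite RtoC_mult. f_equal. rewrite <- psum_RtoC. apply psum_ext.
    intros t _. rewrite (psum_ext _ (fun _ => RtoC 1)) by (intros; apply HFd).
    rewrite psum_RtoC, rsum_one. auto. }
  assert (Hmean2 : forall n, INR (q n) / 2 <= / INR (q n - p n) * rsum (fun t => INR (S (p n) + t)) (q n - p n)).
  { intros n. pose proof (rsum_arith (S (p n)) (q n - p n)). pose proof (Lpos p q n (hpq n)).
    rewrite minus_INR in * by (pose proof (hpq n); lia). rewrite S_INR in H.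
    assert (rsum (fun t => INR (S (p n) + t)) (q n - p n) = (INR (q n) - INR (p n)) * (2 * (INR (p n) + 1) + (INR (q n) - INR (p n)) - 1) / 2) by lra.
    rewrite H1. field_simplify; [|lra]. pose proof (pos_INR (p n)). 
    apply (Rmult_le_reg_r 2); [lra|]. field_simplify; lra. }
  assert (Hgrow : forall T, exists N, forall n, (N <= n)%nat -> T <= Series (fun r => Cmod (rowY D Y n r))).
  { intros T. destruct (nat_above (2 * (T + Cmod (F e_seq)))) as [M HM]. destruct (hq M) as [N HN].
    exists N. intros n Hn. specialize (HN n Hn). apply le_INR in HN.
    pose proof (proj2 (Ffun_props D (fun _ => RtoC 1) (yC p q n) Hu1 (yC_lA D p q n heD hfinD))) as Hle.
    unfold F in Hle. rewrite (Ffun_y D) in Hle; auto. fold F in Hle. rewrite Hmean in Hle.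
    pose proof (Cmod_rev_tri (RtoC (/ INR (q n - p n) * rsum (fun t => INR (S (p n) + t)) (q n - p n))) (Copp (F e_seq))) as Htri.
    rewrite Cmod_opp in Htri.
    replace (Cplus (RtoC (/ INR (q n - p n) * rsum (fun t => INR (S (p n) + t)) (q n - p n))) (Copp (F e_seq)))
      with (Copp (Cminus (F e_seq) (RtoC (/ INR (q n - p n) * rsum (fun t => INR (S (p n) + t)) (q n - p n))))) in Htri by ring.
    rewrite Cmod_opp, Cmod_R, Rabs_pos_eq in Htri.
    2:{ pose proof (Hmean2 n). pose proof (pos_INR (q n)). lra. }
    pose proof (Hmean2 n). change (sem_sum D (yC p q n)) with (Series (fun r => Cmod (rowY D Y n r))) in Hle. lra. }
  apply (hump2 A D Y HY HYm (rows_conv A he) (rows_conv D heD)).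
  - intros n. apply (proj2 (yC_lA A p q n he hfinA)).
  - intros n. apply (proj2 (yC_lA D p q n heD hfinD)).
  - exact Hbound.
  - apply Hpt; auto.
  - exact Hgrow.
  - intros x Hx. apply hD; auto.
Qed.
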